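(* Let $\{\vec S_n\}_{n=1}^6$ (indices modulo $6$) be an oriented, augmented right-angled hexagon in $\mathbb H^4$. For $n=1,\dots,6$ let $\tau_n$ be the unique orientation-preserving isometry of $\mathbb H^4$ with $\tau_n(\vec S_n)=\vec S_n$ and $\tau_n(\vec S_{n-1})=\vec S_{n+1}$; set $\iota_n=(\tau_n\cdots\tau_2\tau_1)^{-1}$ (with $\iota_0=\mathrm{id}$) and $\eta_n=\iota_{n-1}\tau_n\iota_{n-1}^{-1}$. Then (1) $\tau_6\tau_5\cdots\tau_1=\mathrm{id}$; (2) $\eta_1\eta_2\cdots\eta_6=\mathrm{id}$; (3) for $n=1,3,5$: $\iota_n(\vec S_n)=\vec S_1$ and $\iota_n(\vec S_{n+1})=\vec S_6$; (4) for $n=2,4,6$: $\iota_n(\vec S_n)=\vec S_6$ and $\iota_n(\vec S_{n+1})=\vec S_1$.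
   Context: $\mathbb H^4$ is hyperbolic 4-space (oriented). Lines and planes are complete totally geodesic submanifolds of dimension 1 and 2. A flag is a pair $(L,\Pi)$ of a line $L$ contained in a plane $\Pi$; an oriented flag has both $L$ and $\Pi$ oriented. Two lines are orthogonal if they meet perpendicularly; a line $L'$ and a flag $(L,\Pi)$ are orthogonal if $L'$ meets $L$ and is perpendicular to $\Pi$. An augmented right-angled hexagon in $\mathbb H^4$ is a cyclic six-tuple $\{S_n\}_{n=1}^6$ where either $S_1,S_3,S_5$ are lines and $S_2,S_4,S_6$ flags, or vice versa, such that $S_n$ and $S_{n+1}$ are orthogonal for all $n$; it is oriented if each $S_n$ is oriented. For an oriented flag and an oriented line orthogonal to each other, there is a unique orientation-preserving isometry of $\mathbb H^4$ sending this pair to any other such pair (so each $\tau_n$ exists and is unique). *)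

(* Defs.v *)
From HB Require Import structures.
From mathcomp Require Import all_boot all_order all_algebra.
From mathcomp Require Import boolp classical_sets reals.
Set Implicit Arguments. Unset Strict Implicit. Unset Printing Implicit Defensive.
Import Order.TTheory GRing.Theory Num.Theory.
Local Open Scope ring_scope.
Local Open Scope classical_set_scope.

(** Hyperboloid model of H^4 in Minkowski space R^{1,4}; vectors are column
    vectors 'cV_5, coordinate 0 is the time coordinate. *)

Section Hyp.
Variable R : realType.

Definition sigmx (m : nat) : 'M[R]_m :=
  \matrix_(i, j) (if i == j then (if (i : nat) == 0%N then -1 else 1) else 0).

Definition mink (u v : 'cV[R]_5) : R := (u^T *m sigmx 5 *m v) 0 0.

Definition H4 : set 'cV[R]_5 := [set x | mink x x = -1 /\ 0 < x 0 0].

(** A (k+1)-frame [x | v1 ... vk]: x a point of H^4 and v1..vk an orthonormal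
    family of tangent vectors at x. *)
Definition frame (k : nat) (F : 'M[R]_(5, k.+1)) : Prop :=
  F^T *m sigmx 5 *m F = sigmx k.+1 /\ 0 < F 0 0.

(** The oriented totally geodesic k-plane spanned by the frame F, encoded as
    the set of all positively oriented frames of it (based at any of its
    points): frames G spanning the same linear subspace with the same
    orientation (G = F M with det M > 0). *)
Definition oplane_of (k : nat) (F : 'M[R]_(5, k.+1)) : set 'M[R]_(5, k.+1) :=
  [set G | frame G /\ exists M : 'M[R]_k.+1, 0 < \det M /\ G = F *m M].

Definition is_oline (L : set 'M[R]_(5, 2)) : Prop :=
  exists F, frame F /\ L = oplane_of F.
Definition is_oplane (P : set 'M[R]_(5, 3)) : Prop :=
  exists F, frame F /\ P = oplane_of F.

Definition pts (k : nat) (P : set 'M[R]_(5, k.+1)) : set 'cV[R]_5 :=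
  [set x | exists2 G, P G & col 0 G = x].

Inductive obj :=
  | OLine of set 'M[R]_(5, 2)
  | OFlag of set 'M[R]_(5, 2) & set 'M[R]_(5, 3).

Definition obj_wf (S : obj) : Prop :=
  match S with
  | OLine L => is_oline L
  | OFlag L P => [/\ is_oline L, is_oplane P & pts L `<=` pts P]
  end.

Definition is_line (S : obj) : bool := if S is OLine _ then true else false.

Definition orth_lines (L L' : set 'M[R]_(5, 2)) : Prop :=
  exists G G', [/\ L G, L' G', col 0 G = col 0 G' & mink (col 1 G) (col 1 G') = 0].

Definition orth_line_flag (L' L : set 'M[R]_(5, 2)) (P : set 'M[R]_(5, 3)) : Prop :=
  exists G' G H, [/\ L' G' /\ L G /\ P H,
    col 0 G' = col 0 G, col 0 G = col 0 H,
    mink (col 1 G') (col 1 H) = 0 & mink (col 1 G') (col 2 H) = 0].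

Definition orth (S T : obj) : Prop :=
  match S, T with
  | OLine l, OFlag L P => orth_line_flag l L P
  | OFlag L P, OLine l => orth_line_flag l L P
  | _, _ => False
  end.

(** oriented augmented right-angled hexagon, indexed by nat with period 6
    (S_1, ..., S_6 and S_0 = S_6, S_7 = S_1, ...) *)
Definition aug_hexagon (S : nat -> obj) : Prop :=
  [/\ forall n, S (n + 6)%N = S n,
      forall n, obj_wf (S n),
      (forall n, is_line (S n) = odd n) \/ (forall n, is_line (S n) = ~~ odd n)
    & forall n, orth (S n) (S n.+1)].

(** orientation-preserving isometries of H^4 = SO^+(1,4), acting on column
    vectors by x |-> A x *)
Definition or_isom (A : 'M[R]_5) : Prop :=
  [/\ A^T *m sigmx 5 *m A = sigmx 5, \det A = 1 & 0 < A 0 0].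

Definition act_set (k : nat) (A : 'M[R]_5) (P : set 'M[R]_(5, k.+1)) :=
  (fun G => A *m G) @` P.

Definition act (A : 'M[R]_5) (S : obj) : obj :=
  match S with
  | OLine L => OLine (act_set A L)
  | OFlag L P => OFlag (act_set A L) (act_set A P)
  end.

Fixpoint taucomp (tau : nat -> 'M[R]_5) (n : nat) : 'M[R]_5 :=
  if n is m.+1 then tau n *m taucomp tau m else 1%:M.

Definition hiota (tau : nat -> 'M[R]_5) (n : nat) : 'M[R]_5 :=
  invmx (taucomp tau n).

Definition heta (tau : nat -> 'M[R]_5) (n : nat) : 'M[R]_5 :=
  hiota tau n.-1 *m tau n *m invmx (hiota tau n.-1).

End Hyp.

(* Main.v *)
Require Import Defs.
From HB Require Import structures.
From mathcomp Require Import all_boot all_order all_algebra.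
From mathcomp Require Import boolp classical_sets reals.
From mathcomp Require Import ring lra.
Import Order.TTheory GRing.Theory Num.Theory.
Local Open Scope ring_scope.
Local Open Scope classical_set_scope.
Set Implicit Arguments. Unset Strict Implicit.

Lemma det2 (R : realType) (B : 'M[R]_2) : \det B = B 0 0 * B 1 1 - B 0 1 * B 1 0.
Proof.
rewrite (expand_det_col _ 0) !big_ord_recr big_ord0 /= add0r.
rewrite /cofactor !det_mx11 !mxE /=.
have -> : (lift 0 (ord0 : 'I_1)) = 1 by apply/val_inj.
have -> : (lift (widen_ord (leqnSn 1) ord_max) (ord0 : 'I_1)) = 1 by apply/val_inj.
have -> : (lift (@ord_max 1) (ord0 : 'I_1)) = 0 by apply/val_inj.
have -> : widen_ord (leqnSn 1) (ord_max : 'I_1) = 0 by apply/val_inj.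
have -> : (ord_max : 'I_2) = 1 by apply/val_inj.
rewrite expr0 expr1; ring.
Qed.

Lemma colM (R : realType) m n p (A : 'M[R]_(m,n)) (B : 'M[R]_(n,p)) j :
  col j (A *m B) = A *m col j B.
Proof. by rewrite !colE mulmxA. Qed.

Lemma minkE (R : realType) k (F : 'M[R]_(5, k)) i j :
  (F^T *m sigmx R 5 *m F) i j = mink (col i F) (col j F).
Proof.
rewrite /mink tr_col -row_mul.
rewrite -colM.
by rewrite -row_mul !mxE.
Qed.

Lemma mul_col_sum (R : realType) m n (F : 'M[R]_(m, n)) (c : 'cV[R]_n) :
  F *m c = \sum_j c j 0 *: col j F.
Proof.
apply/colP => i; rewrite !mxE summxE; apply: eq_bigr => j _; rewrite !mxE mulrC //.
Qed.

Lemma minkDr (R : realType) (u v w : 'cV[R]_5) : mink u (v + w) = mink u v + mink u w.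
Proof. by rewrite /mink mulmxDr mxE. Qed.
Lemma mink0r (R : realType) (u : 'cV[R]_5) : mink u 0 = 0.
Proof. by rewrite /mink mulmx0 mxE. Qed.
Lemma minkZr (R : realType) (u v : 'cV[R]_5) a : mink u (a *: v) = a * mink u v.
Proof. by rewrite /mink -scalemxAr mxE. Qed.
Lemma sigmx_tr (R : realType) m : (sigmx R m)^T = sigmx R m.
Proof. apply/matrixP => i j; rewrite !mxE eq_sym; case: eqP => // ->; done. Qed.
Lemma minkC (R : realType) (u v : 'cV[R]_5) : mink u v = mink v u.
Proof.
rewrite /mink -[in LHS](trmxK (u^T *m _ *m v)) mxE.
by rewrite !trmx_mul trmxK sigmx_tr mulmxA.
Qed.
Lemma minkDl (R : realType) (u v w : 'cV[R]_5) : mink (v + w) u = mink v u + mink w u.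
Proof. by rewrite minkC minkDr !(minkC u). Qed.
Lemma minkZl (R : realType) (u v : 'cV[R]_5) a : mink (a *: v) u = a * mink v u.
Proof. by rewrite minkC minkZr minkC. Qed.
Lemma minkNr (R : realType) (u v : 'cV[R]_5) : mink u (- v) = - mink u v.
Proof. by rewrite -scaleN1r minkZr mulN1r. Qed.
Lemma minkNl (R : realType) (u v : 'cV[R]_5) : mink (- v) u = - mink v u.
Proof. by rewrite -scaleN1r minkZl mulN1r. Qed.
Lemma mink_isom (R : realType) (A : 'M[R]_5) u v :
  A^T *m sigmx R 5 *m A = sigmx R 5 -> mink (A *m u) (A *m v) = mink u v.
Proof.
move=> hA; rewrite /mink trmx_mul; congr (_ 0 0).
by rewrite -[in RHS]hA !mulmxA.
Qed.

Lemma frame_mink (R : realType) k (F : 'M[R]_(5, k.+1)) i j :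
  frame F -> mink (col i F) (col j F) = sigmx R k.+1 i j.
Proof. by case=> hF _; rewrite -minkE hF. Qed.

Lemma frame_minkE (R : realType) k (F : 'M[R]_(5, k.+1)) :
  (forall i j, mink (col i F) (col j F) = sigmx R k.+1 i j) -> 0 < F 0 0 -> frame F.
Proof. move=> h hp; split => //; apply/matrixP => i j; by rewrite minkE h. Qed.

Lemma mul2 (R : realType) (F : 'M[R]_(5, 2)) (c : 'cV[R]_2) :
  F *m c = c 0 0 *: col 0 F + c 1 0 *: col 1 F.
Proof. rewrite mul_col_sum !big_ord_recl big_ord0 /= addr0.
by have -> : lift ord0 (ord0 : 'I_1) = 1 :> 'I_2 by apply/val_inj. Qed.
Lemma mul3 (R : realType) (F : 'M[R]_(5, 3)) (c : 'cV[R]_3) :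
  F *m c = c 0 0 *: col 0 F + c 1 0 *: col 1 F + c 2 0 *: col 2 F.
Proof. rewrite mul_col_sum !big_ord_recl big_ord0 /= addr0 addrA.
have -> : lift ord0 (ord0 : 'I_2) = 1 :> 'I_3 by apply/val_inj.
by have -> : lift ord0 (lift ord0 (ord0 : 'I_1)) = 2 :> 'I_3 by apply/val_inj. Qed.

Lemma oplane_rel (R : realType) k (F G G2 : 'M[R]_(5, k.+1)) :
  oplane_of F G -> oplane_of F G2 -> exists K, G2 = G *m K /\ 0 < \det K.
Proof.
move=> [_ [M1 [h1 ->]]] [_ [M2 [h2 ->]]].
have u1 : M1 \in unitmx by rewrite unitmxE unitfE gt_eqF.
exists (invmx M1 *m M2); split; first by rewrite -mulmxA mulKVmx.
by rewrite det_mulmx det_inv mulr_gt0 // invr_gt0.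
Qed.

Lemma fix_frame2 (R : realType) (A : 'M[R]_5) (G : 'M[R]_(5, 2)) (N : 'M[R]_2) :
  frame G -> frame (G *m N) -> 0 < \det N -> A *m G = G *m N ->
  A *m col 0 G = col 0 G -> A *m col 1 G = col 1 G.
Proof.
move=> hG hGN hN hAG hx.
have hxx := frame_mink 0 0 hG; have hxw := frame_mink 0 1 hG.
have hwx := frame_mink 1 0 hG; have hww := frame_mink 1 1 hG.
rewrite !mxE /= in hxx hxw hwx hww.
have c0 : col 0 (G *m N) = N 0 0 *: col 0 G + N 1 0 *: col 1 G.
  by rewrite colM mul2 !mxE.
have c1 : col 1 (G *m N) = N 0 1 *: col 0 G + N 1 1 *: col 1 G.
  by rewrite colM mul2 !mxE.
have e0 : col 0 (G *m N) = col 0 G by rewrite -hAG colM hx.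
have h01 := frame_mink 0 1 hGN; have h11 := frame_mink 1 1 hGN.
rewrite !mxE /= in h01 h11.
have m1 : mink (col 1 G) (col 0 (G *m N)) = mink (col 1 G) (col 0 G) by rewrite e0.
have m0 : mink (col 0 G) (col 0 (G *m N)) = mink (col 0 G) (col 0 G) by rewrite e0.
rewrite c0 !(minkDr, minkZr) hxx hxw hwx hww in m1 m0.
rewrite e0 c1 !(minkDr, minkZr, minkDl, minkZl) hxx hxw hwx hww in h01 h11.
rewrite det2 in hN.
have n10 : N 1 0 = 0 by lra.
have n00 : N 0 0 = 1 by lra.
have n01 : N 0 1 = 0 by lra.
rewrite n10 n00 n01 in hN h11.
have n11 : N 1 1 = 1 by nra.
by rewrite -colM hAG c1 n01 n11 scale0r scale1r add0r.
Qed.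

Definition M5 (R : realType) (q0 q1 q2 q3 z : 'cV[R]_5) : 'M[R]_5 :=
  \matrix_(i, j) match nat_of_ord j with
    | 0 => q0 i 0 | 1 => q1 i 0 | 2 => q2 i 0 | 3 => q3 i 0 | _ => z i 0 end.

Lemma M5_lin (R : realType) (q0 q1 q2 q3 z1 z2 : 'cV[R]_5) :
  \det (M5 q0 q1 q2 q3 (z1 + z2)) = \det (M5 q0 q1 q2 q3 z1) + \det (M5 q0 q1 q2 q3 z2).
Proof.
rewrite !(expand_det_col _ ord_max) -big_split /=; apply: eq_bigr => i _.
have cE : forall z, cofactor (M5 q0 q1 q2 q3 z) i ord_max = cofactor (M5 q0 q1 q2 q3 0) i ord_max.
  move=> z; rewrite /cofactor; congr (_ * \det _); apply/matrixP => a b.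
  rewrite !mxE; case: b => [[|[|[|[|b]]]] hb] //=.
rewrite !cE !mxE /= -mulrDl; done.
Qed.

Lemma fix4 (R : realType) (A : 'M[R]_5) (q0 q1 q2 q3 : 'cV[R]_5) :
  A^T *m sigmx R 5 *m A = sigmx R 5 -> \det A = 1 ->
  mink q0 q0 = -1 -> mink q1 q1 = 1 -> mink q2 q2 = 1 -> mink q3 q3 = 1 ->
  mink q0 q1 = 0 -> mink q0 q2 = 0 -> mink q0 q3 = 0 ->
  mink q1 q2 = 0 -> mink q1 q3 = 0 -> mink q2 q3 = 0 ->
  A *m q0 = q0 -> A *m q1 = q1 -> A *m q2 = q2 -> A *m q3 = q3 ->
  A = 1%:M.
Proof.
move=> hA dA h00 h11 h22 h33 h01 h02 h03 h12 h13 h23 a0 a1 a2 a3.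
suff key : forall y : 'cV[R]_5, A *m y = y.
  apply/matrixP => i j; have := key (col j 1%:M).
  by rewrite -colM mulmx1 => /colP /(_ i); rewrite !mxE.
move=> y; set v := A *m y - y.
have ov : forall q, A *m q = q -> mink q v = 0.
  move=> q hq; rewrite /v minkDr minkNr -{1}hq mink_isom // subrr //.
have AM : forall z, A *m M5 q0 q1 q2 q3 z = M5 q0 q1 q2 q3 (A *m z).
  move=> z; apply/matrixP => i j; rewrite !mxE.
  under eq_bigr do rewrite mxE.
  case: j => [[|[|[|[|j]]]] hj] /=.
  - by transitivity ((A *m q0) i 0); [rewrite mxE | rewrite a0].
  - by transitivity ((A *m q1) i 0); [rewrite mxE | rewrite a1].
  - by transitivity ((A *m q2) i 0); [rewrite mxE | rewrite a2].
  - by transitivity ((A *m q3) i 0); [rewrite mxE | rewrite a3].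
  - by [].
have dv : \det (M5 q0 q1 q2 q3 v) = 0.
  have := M5_lin q0 q1 q2 q3 y v.
  rewrite /v addrC subrK -AM det_mulmx dA mul1r => h.
  by apply: (@addrI _ (\det (M5 q0 q1 q2 q3 y))); rewrite addr0 -h.
move: dv; rewrite -det_tr => /eqP /det0P [r nr rM].
have Mk : M5 q0 q1 q2 q3 v *m r^T = 0 by rewrite -[LHS]trmxK trmx_mul trmxK rM trmx0.
have Mk2 : forall z, M5 q0 q1 q2 q3 z *m r^T = r 0 0 *: q0 + r 0 1 *: q1 + r 0 2 *: q2
   + r 0 3 *: q3 + r 0 4 *: z.
  move=> z.
  have o1 : lift ord0 (ord0 : 'I_4) = 1 :> 'I_5 by apply/val_inj.
  have o2 : lift ord0 (lift ord0 (ord0 : 'I_3)) = 2 :> 'I_5 by apply/val_inj.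
  have o3 : lift ord0 (lift ord0 (lift ord0 (ord0 : 'I_2))) = 3 :> 'I_5 by apply/val_inj.
  have o4 : lift ord0 (lift ord0 (lift ord0 (lift ord0 (ord0 : 'I_1)))) = 4 :> 'I_5 by apply/val_inj.
  apply/colP => i; rewrite !mxE !big_ord_recl big_ord0 /= !mxE /= o4 o3 o2 o1.
  rewrite addr0; ring.
have Mk2v := Mk2 v; rewrite Mk in Mk2v; clear Mk2; rename Mk2v into Mk2.

have e0 := congr1 (mink q0) Mk2; have e1 := congr1 (mink q1) Mk2.
have e2 := congr1 (mink q2) Mk2; have e3 := congr1 (mink q3) Mk2.
have ov0 := ov _ a0; have ov1 := ov _ a1; have ov2 := ov _ a2; have ov3 := ov _ a3.
have hv : v = A *m y - y by [].
clearbody v.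
rewrite !mink0r in e0 e1 e2 e3.
rewrite !(minkDr, minkZr) ov0 ov1 ov2 ov3 h00 h11 h22 h33 h01 h02 h03 h12 h13 h23
  !(minkC q1 q0, minkC q2 q0, minkC q3 q0, minkC q2 q1, minkC q3 q1, minkC q3 q2)
  h01 h02 h03 h12 h13 h23 in e0 e1 e2 e3.
have r0 : r 0 0 = 0 by lra.
have r1 : r 0 1 = 0 by lra.
have r2 : r 0 2 = 0 by lra.
have r3 : r 0 3 = 0 by lra.
rewrite r0 r1 r2 r3 !scale0r !add0r in Mk2.
have r4 : r 0 4 != 0.
  apply/negP => /eqP r4; move/negP: nr; apply; apply/eqP/rowP => j; rewrite mxE.
  case: j => [[|[|[|[|[|j]]]]] hj] //=.
  - by rewrite -[RHS]r0; congr (r _ _); apply/val_inj.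
  - by rewrite -[RHS]r1; congr (r _ _); apply/val_inj.
  - by rewrite -[RHS]r2; congr (r _ _); apply/val_inj.
  - by rewrite -[RHS]r3; congr (r _ _); apply/val_inj.
  - by rewrite -[RHS]r4; congr (r _ _); apply/val_inj.
have : v = 0.
  by move/eqP: Mk2; rewrite eq_sym scalemx_eq0 (negbTE r4) /= => /eqP.
by move/eqP; rewrite hv subr_eq0 => /eqP.
Qed.

Lemma sq0 (R : realType) (x y : R) : x ^+ 2 + y ^+ 2 = 0 -> x = 0 /\ y = 0.
Proof.
move=> h; have hx := sqr_ge0 x; have hy := sqr_ge0 y.
have ex : x ^+ 2 = 0 by lra.
have ey : y ^+ 2 = 0 by lra.
by split; apply/eqP; rewrite -sqrf_eq0 ?ex ?ey.
Qed.

Lemma act_mem (R : realType) k (A : 'M[R]_5) (P : set 'M[R]_(5, k.+1)) G :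
  act_set A P = P -> P G -> P (A *m G).
Proof. by move=> h hG; rewrite -h; exists G. Qed.

Lemma plane_rel (R : realType) k (P : set 'M[R]_(5, k.+1)) G G2 :
  (exists F, frame F /\ P = oplane_of F) -> P G -> P G2 ->
  [/\ frame G, frame G2 & exists K, G2 = G *m K /\ 0 < \det K].
Proof.
move=> [F [_ ->]] h1 h2; split; [exact: h1.1 | exact: h2.1 | exact: oplane_rel h1 h2].
Qed.

Lemma uniq_isom (R : realType) (A : 'M[R]_5) (l L : set 'M[R]_(5, 2)) (P : set 'M[R]_(5, 3)) :
  A^T *m sigmx R 5 *m A = sigmx R 5 -> \det A = 1 ->
  is_oline l -> is_oline L -> is_oplane P -> pts L `<=` pts P ->
  orth_line_flag l L P -> act_set A l = l -> act_set A L = L -> act_set A P = P ->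
  A = 1%:M.
Proof.
move=> hA dA ol oL oP sLP [G' [G [H [[lG' [LG PH]] eG' eG hu1 hu2]]]] al aL aP.
have [fG' fAG' [M [hM dM]]] := plane_rel ol lG' (act_mem al lG').
have [fG fAG [N [hN dN]]] := plane_rel oL LG (act_mem aL LG).
have [fH fAH [K [hK dK]]] := plane_rel oP PH (act_mem aP PH).
have T2 : forall (F : 'M[R]_(5,2)), frame F ->
   [/\ mink (col 0 F) (col 0 F) = -1, mink (col 0 F) (col 1 F) = 0,
       mink (col 1 F) (col 0 F) = 0 & mink (col 1 F) (col 1 F) = 1].
  by move=> F fF; rewrite !frame_mink // !mxE.
have T3 : forall (F : 'M[R]_(5,3)), frame F ->
   [/\ mink (col 0 F) (col 0 F) = -1, mink (col 0 F) (col 1 F) = 0,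
       mink (col 0 F) (col 2 F) = 0, mink (col 1 F) (col 0 F) = 0 &
     [/\ mink (col 1 F) (col 1 F) = 1, mink (col 1 F) (col 2 F) = 0,
       mink (col 2 F) (col 0 F) = 0, mink (col 2 F) (col 1 F) = 0 &
       mink (col 2 F) (col 2 F) = 1]].
  by move=> F fF; rewrite !frame_mink // !mxE.
have [gxx gxu gux guu] := T2 _ fG'.
have [hxx hx1 hx2 h1x [h11 h12 h2x h21 h22]] := T3 _ fH.
rewrite eG' eG in gxx gxu gux guu.
set x := col 0 H in gxx gxu gux guu hxx hx1 hx2 h1x h2x eG eG'.
set u := col 1 G' in gxu gux guu hu1 hu2.
set h1 := col 1 H in hx1 h1x h11 h12 h21 hu1.
set h2 := col 2 H in hx2 h2x h12 h21 h22 hu2.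
have eGx : col 0 G' = x by rewrite eG' eG.
have eGx2 : col 0 G = x by rewrite eG.
have hu1' : mink h1 u = 0 by rewrite minkC.
have hu2' : mink h2 u = 0 by rewrite minkC.
have AxM : A *m x = M 0 0 *: x + M 1 0 *: u.
  by rewrite -eGx -colM hM colM mul2 !mxE eGx.
have AxK : A *m x = K 0 0 *: x + K 1 0 *: h1 + K 2 0 *: h2.
  by rewrite -colM hK colM mul3 !mxE.
have m10 : M 1 0 = 0.
  have := congr1 (mink u) (etrans (esym AxM) AxK).
  rewrite !(minkDr, minkZr) guu gux hu1 hu2; lra.
have m00 : M 0 0 = 1.
  have e1 : mink (A *m x) (A *m x) = -1 by rewrite mink_isom.
  have pos : 0 < (A *m G') 0 0 by case: fAG'.
  have xpos : 0 < x 0 0 by rewrite /x mxE; case: fH.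
  have : (A *m G') 0 0 = (A *m x) 0 0.
    by transitivity ((col 0 (A *m G')) 0 0); [rewrite [in RHS]mxE | rewrite colM eGx].
  rewrite AxM m10 scale0r addr0 [in RHS]mxE => h.
  rewrite AxM m10 scale0r addr0 !(minkZr, minkZl) gxx in e1.
  rewrite h in pos; nra.
have Ax : A *m x = x by rewrite AxM m10 m00 scale0r addr0 scale1r.
have Au : A *m u = u.
  apply: (fix_frame2 fG' _ dM hM); first by rewrite -hM.
  by rewrite eGx.
have Aw : A *m col 1 G = col 1 G.
  apply: (fix_frame2 fG _ dN hN); first by rewrite -hN.
  by rewrite eGx2.
have k0 := etrans (esym AxK) Ax.
have k00 : K 0 0 = 1.
  have := congr1 (mink x) k0.
  by rewrite !(minkDr, minkZr) hxx hx1 hx2; lra.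
have k10 : K 1 0 = 0.
  have := congr1 (mink h1) k0.
  by rewrite !(minkDr, minkZr) h1x h11 h12; lra.
have k20 : K 2 0 = 0.
  have := congr1 (mink h2) k0.
  by rewrite !(minkDr, minkZr) h2x h21 h22; lra.
have Ah1 : A *m h1 = K 0 1 *: x + K 1 1 *: h1 + K 2 1 *: h2.
  by rewrite -colM hK colM mul3 !mxE.
have Ah2 : A *m h2 = K 0 2 *: x + K 1 2 *: h1 + K 2 2 *: h2.
  by rewrite -colM hK colM mul3 !mxE.
have iso : forall a b, mink (A *m a) (A *m b) = mink a b by move=> a b; rewrite mink_isom.
have k01 : K 0 1 = 0.
  have := iso x h1; rewrite Ax Ah1 !(minkDr, minkZr) hxx hx1 hx2; lra.
have k02 : K 0 2 = 0.
  have := iso x h2; rewrite Ax Ah2 !(minkDr, minkZr) hxx hx1 hx2; lra.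
have e11 := iso h1 h1; have e12 := iso h1 h2; have e22 := iso h2 h2.
rewrite Ah1 Ah2 k01 k02 !scale0r !add0r !(minkDr, minkZr, minkDl, minkZl)
  h11 h12 h21 h22 in e11 e12 e22.
have detK : \det K = K 1 1 * K 2 2 - K 1 2 * K 2 1.
  rewrite (expand_det_col _ 0) !big_ord_recl big_ord0 /=.
  have o1 : lift ord0 (ord0 : 'I_2) = 1 :> 'I_3 by apply/val_inj.
  have o2 : lift ord0 (lift ord0 (ord0 : 'I_1)) = 2 :> 'I_3 by apply/val_inj.
  rewrite o1 o2 k10 k20 k00 !mul0r !addr0 mul1r /cofactor det2 !mxE /=.
  have p1 : lift 0 (0 : 'I_2) = 1 :> 'I_3 by apply/val_inj.
  have p2 : lift 0 (1 : 'I_2) = 2 :> 'I_3 by apply/val_inj.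
  rewrite p1 p2 expr0 mul1r.
  done.
set w := col 1 G in Aw.
have [gxx' gxw gwx gww] := T2 _ fG.
rewrite eGx2 -/w in gxx' gxw gwx gww.
pose c : R := 5 / 4.
pose sg : R := if 0 <= w 0 0 then 3 / 4 else - (3 / 4).
have sgw : 0 <= sg * w 0 0 by rewrite /sg; case: ifP => h; nra.
have csg : c * c - sg * sg = 1 by rewrite /sg /c; case: ifP => _; field.
pose B : 'M[R]_2 := \matrix_(i, j) if i == j then c else sg.
have cB0 : col 0 (G *m B) = c *: x + sg *: w by rewrite colM mul2 !mxE /= eGx2.
have cB1 : col 1 (G *m B) = sg *: x + c *: w by rewrite colM mul2 !mxE /= eGx2.
have fGB : frame (G *m B).
  apply: frame_minkE; last first.
    have -> : (G *m B) 0 0 = (col 0 (G *m B)) 0 0 by rewrite [in RHS]mxE.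
    rewrite cB0.
    have -> : (c *: x + sg *: w) 0 0 = c * x 0 0 + sg * w 0 0 by rewrite !mxE.
    have : 0 < x 0 0 by rewrite /x mxE; case: fH.
    rewrite /c; nra.
  move=> i j.
  have [-> | ->] : i = 0 \/ i = 1 by case: i => [[|[|i]] hi]; [left; apply/val_inj | right; apply/val_inj | move: hi].
  - have [-> | ->] : j = 0 \/ j = 1 by case: j => [[|[|j]] hj]; [left; apply/val_inj | right; apply/val_inj | move: hj].
    + rewrite ?cB0 ?cB1 !(minkDr, minkZr, minkDl, minkZl) gxx' gxw gwx gww !mxE /=; lra.
    + rewrite ?cB0 ?cB1 !(minkDr, minkZr, minkDl, minkZl) gxx' gxw gwx gww !mxE /=; lra.
  - have [-> | ->] : j = 0 \/ j = 1 by case: j => [[|[|j]] hj]; [left; apply/val_inj | right; apply/val_inj | move: hj].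
    + rewrite ?cB0 ?cB1 !(minkDr, minkZr, minkDl, minkZl) gxx' gxw gwx gww !mxE /=; lra.
    + rewrite ?cB0 ?cB1 !(minkDr, minkZr, minkDl, minkZl) gxx' gxw gwx gww !mxE /=; lra.
have LGB : L (G *m B).
  move: (LG); case: (oL) => FL [_ ->] [_ [MG [dMG eMG]]].
  split => //; exists (MG *m B); split; last by rewrite mulmxA eMG.
  by rewrite det_mulmx (det2 B) !mxE /= csg mulr1.
have [G2 PG2 eG2] : pts P (col 0 (G *m B)) by apply: sLP; exists (G *m B).
have [_ _ [K2 [hK2 _]]] := plane_rel oP PH PG2.
have yK : col 0 (G *m B) = K2 0 0 *: x + K2 1 0 *: h1 + K2 2 0 *: h2.
  by rewrite -eG2 hK2 colM mul3 !mxE.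
have Ay : A *m col 0 (G *m B) = col 0 (G *m B).
  by rewrite cB0 mulmxDr -!scalemxAr Ax Aw.
have yy := frame_mink 0 0 fGB.
have xy : mink x (col 0 (G *m B)) = mink x (col 0 (G *m B)) by [].
rewrite {1}cB0 {1}yK !(minkDr, minkZr) ?hxx ?hx1 ?hx2 ?gxx' ?gxw in xy.
rewrite yK !(minkDr, minkZr, minkDl, minkZl) hxx hx1 hx2 h1x h11 h12 h2x h21 h22 !mxE /= in yy.
rewrite yK mulmxDr mulmxDr -!scalemxAr Ax Ah1 Ah2 k01 k02 !scale0r !add0r in Ay.
have q1 := congr1 (mink h1) Ay; have q2 := congr1 (mink h2) Ay.
rewrite !(minkDr, minkZr) h1x h11 h12 h2x h21 h22 in q1 q2.
rewrite detK in dK.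
set a := K 1 1 in e11 e12 e22 dK q1 q2 Ah1.
set b := K 1 2 in e11 e12 e22 dK q1 q2 Ah2.
set cc := K 2 1 in e11 e12 e22 dK q1 q2 Ah1.
set d := K 2 2 in e11 e12 e22 dK q1 q2 Ah2.
set p := K2 0 0 in xy yy.
set q := K2 1 0 in yy q1 q2.
set r := K2 2 0 in yy q1 q2.
have pc : p = c by lra.
have qr : q ^+ 2 + r ^+ 2 = 9 / 16 by rewrite /c in pc; rewrite pc in yy; lra.
have D2 : (a * d - b * cc) ^+ 2 = 1.
  have -> : (a * d - b * cc) ^+ 2 = (a * a + cc * cc) * (b * b + d * d) - (a * b + cc * d) ^+ 2 by ring.
  rewrite /GRing.exp /=; nra.
have D1 : a * d - b * cc = 1 by nra.
have E11 : a * a + cc * cc = 1 by nra.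
have E22 : b * b + d * d = 1 by nra.
have s0 : (a - d) ^+ 2 + (b + cc) ^+ 2 = 0.
  have -> : (a - d) ^+ 2 + (b + cc) ^+ 2 = (a * a + cc * cc) + (b * b + d * d) - 2 * (a * d - b * cc) by ring.
  rewrite E11 E22 D1; ring.
have [ad bc] : a = d /\ b = - cc.
  have [h1' h2'] := sq0 s0; split; [by apply/eqP; rewrite -subr_eq0 h1' | by apply/eqP; rewrite -addr_eq0 h2'].
rewrite -ad bc in q1 q2.
have L1 : q * a - r * cc - q = 0 by lra.
have L2 : q * cc + r * a - r = 0 by lra.
have z1 : ((a - 1) ^+ 2 + cc ^+ 2) * q = 0.
  have -> : ((a - 1) ^+ 2 + cc ^+ 2) * q = (a - 1) * (q * a - r * cc - q) + cc * (q * cc + r * a - r) by ring.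
  by rewrite L1 L2; ring.
have z2 : ((a - 1) ^+ 2 + cc ^+ 2) * r = 0.
  have -> : ((a - 1) ^+ 2 + cc ^+ 2) * r = - cc * (q * a - r * cc - q) + (a - 1) * (q * cc + r * a - r) by ring.
  by rewrite L1 L2; ring.
have z : (a - 1) ^+ 2 + cc ^+ 2 = 0.
  have h0 := sqr_ge0 q; have h0' := sqr_ge0 r; nra.
have [a1 c0] : a = 1 /\ cc = 0.
  by have [h1' h2'] := sq0 z; split => //; apply/eqP; rewrite -subr_eq0 h1'.
have Ah1' : A *m h1 = h1 by rewrite Ah1 k01 a1 c0 !scale0r !add0r ?addr0 scale1r.
have Ah2' : A *m h2 = h2 by rewrite Ah2 k02 bc -ad a1 c0 oppr0 !scale0r !add0r ?addr0 scale1r.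
apply: (fix4 hA dA hxx guu h11 h22 gxu hx1 hx2 _ _ h12 Ax Au Ah1' Ah2').
- by rewrite minkC.
- by rewrite minkC.
Qed.

Lemma act_comp (R : realType) (A B : 'M[R]_5) X : act (A *m B) X = act A (act B X).
Proof.
have h : forall k (P : set 'M[R]_(5, k.+1)), act_set (A *m B) P = act_set A (act_set B P).
  move=> k P; rewrite /act_set image_comp; congr (_ @` _).
  by apply: funext => G /=; rewrite mulmxA.
by case: X => [l | L P] /=; rewrite !h.
Qed.

Lemma act1 (R : realType) X : act (1%:M : 'M[R]_5) X = X.
Proof.
have h : forall k (P : set 'M[R]_(5, k.+1)), act_set 1%:M P = P.
  move=> k P; rewrite /act_set.
  have -> : (fun G : 'M[R]_(5, k.+1) => 1%:M *m G) = id by apply: funext => G; rewrite mul1mx.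
  by rewrite image_id.
by case: X => [l | L P] /=; rewrite !h.
Qed.

Lemma act_invE (R : realType) (A : 'M[R]_5) X Y :
  A \in unitmx -> act A X = Y -> act (invmx A) Y = X.
Proof. by move=> uA <-; rewrite -act_comp mulVmx // act1. Qed.

Lemma tcS (R : realType) (tau : nat -> 'M[R]_5) n :
  taucomp tau n.+1 = tau n.+1 *m taucomp tau n.
Proof. by []. Qed.

Lemma tele (R : realType) (A B C : 'M[R]_5) : B \in unitmx ->
  invmx A *m B *m (invmx B *m C) = invmx A *m C.
Proof. by move=> uB; rewrite mulmxA mulmxK. Qed.

Unset Implicit Arguments.
Local Close Scope classical_set_scope.

Theorem lemma6p6 (R : realType) (S : nat -> obj R) (tau : nat -> 'M[R]_5) :
  aug_hexagon S ->
  (forall n : nat, (1 <= n <= 6)%N ->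
     [/\ or_isom (tau n), act (tau n) (S n) = S n & act (tau n) (S n.-1) = S n.+1]) ->
  [/\ tau 6%N *m tau 5%N *m tau 4%N *m tau 3%N *m tau 2%N *m tau 1%N = 1%:M,
      heta tau 1 *m heta tau 2 *m heta tau 3 *m heta tau 4 *m heta tau 5 *m heta tau 6 = 1%:M,
      (forall n : nat, n \in [:: 1; 3; 5]%N ->
         act (hiota tau n) (S n) = S 1%N /\ act (hiota tau n) (S n.+1) = S 6%N) &
      (forall n : nat, n \in [:: 2; 4; 6]%N ->
         act (hiota tau n) (S n) = S 6%N /\ act (hiota tau n) (S n.+1) = S 1%N)].
Proof.
move=> [hper hwf _ horth] htau.
have S60 : S 6 = S 0 := hper 0.
have S71 : S 7 = S 1 := hper 1.
pose T := taucomp tau.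
have isoT : forall n, (n <= 6)%N ->
    (T n)^T *m sigmx R 5 *m T n = sigmx R 5 /\ \det (T n) = 1.
  elim => [|n IH] hn.
    by rewrite /T /= trmx1 mul1mx mulmx1 det1.
  have [IH1 IH2] := IH (ltnW hn).
  have [[h1 h2 _] _ _] := htau n.+1 hn.
  rewrite /T tcS -/(T n) det_mulmx h2 IH2 mulr1; split => //.
  rewrite trmx_mul -!mulmxA (mulmxA (tau n.+1)^T) (mulmxA _ _ (T n)) h1.
  by rewrite mulmxA.
have uT : forall n, (n <= 6)%N -> T n \in unitmx.
  by move=> n hn; rewrite unitmxE (isoT n hn).2 unitr1.
have ta : forall n, (1 <= n <= 6)%N -> act (tau n) (S n) = S n.
  by move=> n hn; have [_ ? _] := htau n hn.
have tb : forall n, (1 <= n <= 6)%N -> act (tau n) (S n.-1) = S n.+1.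
  by move=> n hn; have [_ _ ?] := htau n hn.
have a1 : act (T 1) (S 1) = S 1 by rewrite /T tcS act_comp act1 ta.
have b1 : act (T 1) (S 0) = S 2 by rewrite /T tcS act_comp act1 (tb 1).
have a2 : act (T 2) (S 1) = S 3 by rewrite /T tcS act_comp -/(T 1) a1 (tb 2).
have b2 : act (T 2) (S 0) = S 2 by rewrite /T tcS act_comp -/(T 1) b1 ta.
have a3 : act (T 3) (S 1) = S 3 by rewrite /T tcS act_comp -/(T 2) a2 ta.
have b3 : act (T 3) (S 0) = S 4 by rewrite /T tcS act_comp -/(T 2) b2 (tb 3).
have a4 : act (T 4) (S 1) = S 5 by rewrite /T tcS act_comp -/(T 3) a3 (tb 4).
have b4 : act (T 4) (S 0) = S 4 by rewrite /T tcS act_comp -/(T 3) b3 ta.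
have a5 : act (T 5) (S 1) = S 5 by rewrite /T tcS act_comp -/(T 4) a4 ta.
have b5 : act (T 5) (S 0) = S 6 by rewrite /T tcS act_comp -/(T 4) b4 (tb 5).
have a6 : act (T 6) (S 1) = S 1 by rewrite /T tcS act_comp -/(T 5) a5 (tb 6) // S71.
have b6 : act (T 6) (S 0) = S 0 by rewrite /T tcS act_comp -/(T 5) b5 ta // S60.
have T6 : T 6 = 1%:M.
  have [i1 i2] := isoT 6 isT.
  move: (horth 0) (hwf 0) (hwf 1) a6 b6.
  case: (S 0) => [l0 | L0 P0]; case: (S 1) => [l1 | L1 P1] //=.
  - move=> hor wl [wL wP wLP] [e1 e2] [e0].
    exact: (uniq_isom i1 i2 wl wL wP wLP hor e0 e1 e2).
  - move=> hor [wL wP wLP] wl [e1] [e0 e0'].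
    exact: (uniq_isom i1 i2 wl wL wP wLP hor e1 e0 e0').
have hiE : forall n, hiota tau n = invmx (T n) by [].
split.
- by rewrite -T6 /T /= mulmx1 !mulmxA.
- have hE : forall n, (n < 6)%N -> heta tau n.+1 = invmx (T n) *m T n.+1.
    by move=> n hn; rewrite /heta /= hiE invmxK /T tcS mulmxA.
  rewrite !hE //.
  rewrite (tele _ _ (uT 1 isT)) (tele _ _ (uT 2 isT)) (tele _ _ (uT 3 isT)).
  rewrite (tele _ _ (uT 4 isT)) (tele _ _ (uT 5 isT)) T6.
  by rewrite /T /= invmx1 mul1mx.
- move=> n; rewrite !inE => /or3P [] /eqP -> /=; rewrite hiE; split;
    apply: act_invE; rewrite ?uT //;
    first [assumption | rewrite {1}S60; assumption | rewrite S60; assumption | rewrite S71; assumption].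
- move=> n; rewrite !inE => /or3P [] /eqP -> /=; rewrite hiE; split;
    apply: act_invE; rewrite ?uT //;
    first [assumption | rewrite {1}S60; assumption | rewrite S60; assumption | rewrite S71; assumption].
Qed.
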